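(* Let $A\in\mathbb{R}^{m\times n}$, $K\in\{0,\ldots,\min\{m,n\}-1\}$, $\gamma>0$, and let $X^*$ be a d-stationary point of $$\min_{X\in\mathbb{R}^{m\times n}}\ \|A-X\|_1+\gamma\mathcal{T}_K(X),$$ where $\|Y\|_1=\sum_{i,j}|Y_{i,j}|$. If $\gamma>\sqrt{mn}$, then $\mathcal{T}_K(X^* )=0$, i.e., $\mathrm{rank}(X^* )\le K$.
   Context: $\mathcal{T}_K(X)=\sum_{i=K+1}^{\min\{m,n\}}\sigma_i(X)$, with $\sigma_i(X)$ the $i$-th largest singular value. A point is d-stationary if the directional derivative of the objective there is $\ge0$ in every direction. *)

(* Defs.v *)
From HB Require Import structures.
From mathcomp Require Import all_boot all_order all_algebra.
From mathcomp Require Import all_classical all_reals.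
From mathcomp Require Import topology normedtype.
Import numFieldNormedType.Exports.
Set Implicit Arguments. Unset Strict Implicit. Unset Printing Implicit Defensive.
Import Order.TTheory GRing.Theory Num.Theory.
Local Open Scope ring_scope.
Local Open Scope classical_set_scope.

Section Defs.
Variable R : realType.

Definition l1norm (m n : nat) (Y : 'M[R]_(m, n)) : R :=
  \sum_(i < m) \sum_(j < n) `|Y i j|.

Definition rdiag (m n : nat) (s : nat -> R) : 'M[R]_(m, n) :=
  \matrix_(i < m, j < n) (if (i : nat) == (j : nat) then s (i : nat) else 0).

Definition is_singular_values (m n : nat) (X : 'M[R]_(m, n)) (s : nat -> R) :=
  [/\ (forall i j : nat, (i <= j < minn m n)%N -> s j <= s i),
      (forall i : nat, 0 <= s i),
      (forall i : nat, (minn m n <= i)%N -> s i = 0) &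
      exists (U : 'M[R]_m) (V : 'M[R]_n),
        [/\ U^T *m U = 1%:M, V^T *m V = 1%:M & X = U *m rdiag m n s *m V^T]].

(* sigma X i = (i+1)-th largest singular value of X (0-indexed). *)
Definition sigma (m n : nat) (X : 'M[R]_(m, n)) : nat -> R :=
  match pselect (exists s, is_singular_values X s) with
  | left h => projT1 (cid h)
  | right _ => fun _ => 0
  end.

(* T_K(X) = sum_{i = K+1}^{min(m,n)} sigma_i(X)  (1-indexed in the paper) *)
Definition TK (K m n : nat) (X : 'M[R]_(m, n)) : R :=
  \sum_(K <= i < minn m n) sigma X i.

Definition dir_deriv (m n : nat) (F : 'M[R]_(m, n) -> R) (X D : 'M[R]_(m, n))
  (l : R) : Prop :=
  (fun t : R => (F (X + t *: D) - F X) / t) @ (0 : R)^'+ --> l.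

Definition d_stationary (m n : nat) (F : 'M[R]_(m, n) -> R) (X : 'M[R]_(m, n)) :=
  forall D : 'M[R]_(m, n), exists l : R, dir_deriv F X D l /\ 0 <= l.

End Defs.

(* Main.v *)
Require Import Defs.
From HB Require Import structures.
From mathcomp Require Import all_boot all_order all_algebra.
From mathcomp Require Import all_classical all_reals.
From mathcomp Require Import topology normedtype.
From mathcomp Require Import spectral sesquilinear complex.
From mathcomp Require Import ring lra.
Import Order.TTheory GRing.Theory Num.Theory.
Local Open Scope ring_scope.
Set Implicit Arguments. Unset Strict Implicit. Unset Printing Implicit Defensive.

Lemma char_poly_conj (F : comUnitRingType) n (P A : 'M[F]_n) :
  P \in unitmx -> char_poly (invmx P *m A *m P) = char_poly A.
Proof.
move=> Pu.
have HPP : map_mx polyC (invmx P) *m map_mx polyC P = 1%:M.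
  by rewrite -map_mxM mulVmx // map_mx1.
have E : 'X%:M - map_mx polyC (invmx P *m A *m P) =
   map_mx polyC (invmx P) *m ('X%:M - map_mx polyC A) *m map_mx polyC P.
  rewrite mulmxBr mulmxBl -!map_mxM; congr (_ - _).
  by rewrite scalar_mxC -mulmxA HPP mulmx1.
rewrite /char_poly /char_poly_mx E !det_mulmx mulrC mulrA -det_mulmx.
by rewrite -map_mxM mulmxV // map_mx1 det1 mul1r.
Qed.

Lemma sym_split (R : rcfType) n (A : 'M[R]_n) : A^T = A ->
  exists r : 'I_n -> R, char_poly A = \prod_(i < n) ('X - (r i)%:P) /\
     \sum_i r i = \tr A.
Proof.
move=> AT.
pose Ac := map_mx (real_complex R) A.
have Acreal : Ac \is a realmx.
  by apply/mxOverP => i j; rewrite mxE; apply/complex_realP; exists (A i j).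
have herm : Ac \is hermsymmx.
  apply/is_hermitianmxP; rewrite expr0 scale1r.
  have -> : Ac^T = Ac by rewrite /Ac map_trmx AT.
  by rewrite realmxC.
have /orthomx_spectralP Aeq := hermitian_normalmx herm.
have dreal := hermitian_spectral_diag_real herm.
set P := spectralmx Ac in Aeq; set d := spectral_diag Ac in Aeq dreal.
have Pu : P \in unitmx by apply: spectral_unit.
pose r i := @complex.Re R (d 0 i).
have rE i : real_complex R (r i) = d 0 i.
  by apply: RRe_real; move/mxOverP: dreal; apply.
exists r; split.
  apply: (map_poly_inj (real_complex R)).
  rewrite map_char_poly -/Ac Aeq char_poly_conj // char_poly_trig ?diag_mx_is_trig //.
  rewrite rmorph_prod; apply: eq_bigr => i _.
  by rewrite rmorphB /= map_polyX map_polyC /= rE mxE eqxx mulr1n.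
apply: (@complexI R); rewrite rmorph_sum /= -trace_map_mx -/Ac.
under eq_bigr do rewrite rE.
by rewrite Aeq -mulmxA mxtrace_mulC -mulmxA mulmxV // mulmx1 mxtrace_diag.
Qed.

Lemma dot_self (R : realFieldType) k (u : 'rV[R]_k) :
  (u *m u^T) 0 0 = \sum_i u 0 i ^+ 2.
Proof. by rewrite mxE; apply: eq_bigr => i _; rewrite mxE expr2. Qed.

Lemma dot_self_ge0 (R : realFieldType) k (u : 'rV[R]_k) : 0 <= (u *m u^T) 0 0.
Proof. by rewrite dot_self sumr_ge0 // => i _; rewrite sqr_ge0. Qed.

Lemma dot_self_eq0 (R : realFieldType) k (u : 'rV[R]_k) :
  ((u *m u^T) 0 0 == 0) = (u == 0).
Proof.
apply/idP/idP; last by move/eqP->; rewrite mul0mx mxE.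
rewrite dot_self psumr_eq0 => [/allP H|i _]; last by rewrite sqr_ge0.
apply/eqP/matrixP => i j; rewrite ord1 mxE.
by have := H j (mem_index_enum j); rewrite sqrf_eq0 => /eqP.
Qed.

Lemma householder (R : realFieldType) n (v : 'rV[R]_n.+1) :
  v *m v^T = 1%:M -> exists H : 'M_n.+1, H^T *m H = 1%:M /\ 'e_0 *m H = v.
Proof.
move=> vv.
set e : 'rV[R]_n.+1 := 'e_0.
have [w0|wn0] := eqVneq (v - e) 0.
  by exists 1%:M; rewrite trmx1 mulmx1; split => //; move/eqP: w0; rewrite subr_eq0 => /eqP ->; rewrite mulmx1.
set w := v - e in wn0 *.
set c := (w *m w^T) 0 0.
have ee : e *m e^T = 1%:M.
  by rewrite trmx_delta -rowE [LHS]mx11_scalar !mxE.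
have ev : e *m v^T = (v 0 0)%:M by rewrite -rowE [LHS]mx11_scalar !mxE.
have ve : v *m e^T = (v 0 0)%:M by rewrite trmx_delta -colE [LHS]mx11_scalar !mxE.
have cE : c = 2 - 2 * v 0 0.
  rewrite /c /w linearB /= mulmxBl !mulmxBr ee ev ve vv !mxE /=; ring.
have cn0 : c != 0 by rewrite /c dot_self_eq0.
have ww : w *m w^T = c%:M by rewrite [LHS]mx11_scalar.
set a := 2 / c.
set W := w^T *m w.
have WW : W *m W = c *: W by rewrite /W mulmxA -[w^T *m w *m w^T]mulmxA ww mul_mx_scalar scalemxAl.
exists (1%:M - a *: W).
have HT : (1%:M - a *: W)^T = 1%:M - a *: W.
  by rewrite linearB /= trmx1 linearZ /= /W trmx_mul trmxK.
rewrite HT; split.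
  rewrite mulmxBl !mulmxBr !mul1mx !mulmx1 -!scalemxAl -!scalemxAr WW !scalerA.
  have -> : a * a * c = a + a by rewrite /a; field.
  by rewrite scalerDl opprB addrK subrK.
rewrite mulmxBr mulmx1 -scalemxAr /W mulmxA.
have -> : e *m w^T = (v 0 0 - 1)%:M.
  by rewrite /w linearB /= mulmxBr ev ee -raddfB.
rewrite mul_scalar_mx scalerA.
have -> : a * (v 0 0 - 1) = -1.
  rewrite /a cE; field.
  by rewrite -cE.
by rewrite scaleN1r opprK /w addrC subrK.
Qed.

Lemma ex_max (R : realDomainType) n (f : 'I_n.+1 -> R) : exists i, forall j, f j <= f i.
Proof.
case: (@arg_maxP _ _ _ ord0 xpredT f) => // i _ H; exists i => j; exact: H.
Qed.

Lemma root_prodI (R : fieldType) n (r : 'I_n -> R) x :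
  root (\prod_(i < n) ('X - (r i)%:P)) x -> exists i, x = r i.
Proof.
rewrite /root horner_prod => /prodf_eq0 [i _]; rewrite hornerXsubC subr_eq0 => /eqP ->.
by exists i.
Qed.

Lemma top_eig (R : realType) n (B : 'M[R]_n.+1) : B^T = B -> 0 < \tr B ->
  exists l (v : 'rV_n.+1), [/\ 0 < l, v *m v^T = 1%:M, v *m B = l *: v &
    forall mu (w : 'rV_n.+1), w != 0 -> w *m B = mu *: w -> mu <= l].
Proof.
move=> BT trpos.
have [r [cpE trE]] := @sym_split R _ B BT.
have [i0 Hmax] := ex_max r.
have lpos : 0 < r i0.
  rewrite ltNge; apply/negP => Hl.
  have : \tr B <= 0.
    by rewrite -trE; apply: sumr_le0 => i _; exact: le_trans (Hmax i) Hl.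
  by rewrite leNgt trpos.
have : eigenvalue B (r i0).
  rewrite eigenvalue_root_char cpE /root horner_prod; apply/prodf_eq0.
  by exists i0 => //; rewrite hornerXsubC subrr.
move/eigenvalueP => [v vB vn0].
set k := (v *m v^T) 0 0.
have kpos : 0 < k by rewrite lt_def dot_self_eq0 vn0 dot_self_ge0.
exists (r i0), ((Num.sqrt k)^-1 *: v); split => //.
- rewrite linearZ /= -scalemxAl -scalemxAr scalerA [v *m v^T]mx11_scalar -/k.
  rewrite scale_scalar_mx; congr (_%:M).
  rewrite -invfM -expr2 sqr_sqrtr ?(ltW kpos) // mulVf // gt_eqF //.
- by rewrite -scalemxAl vB !scalerA mulrC.
move=> mu w wn0 wB.
have : eigenvalue B mu by apply/eigenvalueP; exists w.
rewrite eigenvalue_root_char cpE => /root_prodI [i ->]; exact: Hmax.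
Qed.

Lemma sum_delta (R : nmodType) m i (c : R) :
  \sum_(k < m) (if (k : nat) == i then c else 0) = if (i < m)%N then c else 0.
Proof.
case: ltnP => Hi.
  rewrite (bigD1 (Ordinal Hi)) //= eqxx big1 ?addr0 // => k /negbTE Hk.
  by rewrite ifF //; apply: contraNF Hk => /eqP e; apply/eqP/val_inj.
by rewrite big1 // => k _; rewrite ifF //; apply/negbTE; rewrite neq_ltn (leq_trans (ltn_ord k) Hi).
Qed.

Lemma rdiag_TT (R : realType) m n (s : nat -> R) :
  (forall i, (minn m n <= i)%N -> s i = 0) ->
  (rdiag m n s)^T *m rdiag m n s = diag_mx (\row_(i < n) s i ^+ 2).
Proof.
move=> s0; apply/matrixP => i j; rewrite !mxE.
under eq_bigr => k _ do rewrite !mxE.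
have -> : \sum_(k < m) (if (k:nat) == i then s k else 0) * (if (k:nat) == j then s k else 0)
   = \sum_(k < m) (if (k:nat) == i then (if (i : nat) == j then s i ^+ 2 else 0) else 0).
  apply: eq_bigr => k _; case: eqP => [->|_]; last by rewrite mul0r.
  by case: eqP => [->|_]; rewrite ?mulr0 ?expr2.
rewrite sum_delta; case: (eqVneq i j) => [<-|ij]; last first.
  have -> : ((i : nat) == j) = false by apply: contraNF ij => /eqP e; apply/eqP/val_inj.
  by rewrite if_same mulr0n.
rewrite eqxx mulr1n; case: ltnP => // Hi.
by rewrite s0 ?expr0n // (leq_trans (geq_minl m n) Hi).
Qed.

Lemma rdiag0 (R : realType) m n : rdiag m n (fun _ => 0 : R) = 0.
Proof. by apply/matrixP => i j; rewrite !mxE if_same. Qed.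

Lemma sv_zero (R : realType) m n : is_singular_values (0 : 'M[R]_(m, n)) (fun _ => 0).
Proof.
split => //.
exists 1%:M, 1%:M; rewrite rdiag0 !trmx1 !mulmx1 mulmx0; split => //.
Qed.

Lemma rdiag_block (R : realType) m n (x : R) (s : nat -> R) :
  rdiag (1 + m) (1 + n) (fun i => if i is i'.+1 then s i' else x) =
  block_mx (x%:M : 'M_1) 0 0 (rdiag m n s).
Proof.
apply/matrixP => i j.
case: (@split_ordP 1 m i) => i' ->; case: (@split_ordP 1 n j) => j' ->;
  rewrite [LHS]mxE ?block_mxEul ?block_mxEur ?block_mxEdl ?block_mxEdr /=.
- by rewrite !ord1 /= mxE eqxx mulr1n.
- by rewrite !ord1 /= mxE.
- by rewrite !ord1 /= mxE.
- by rewrite mxE /= eqSS add0n.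
Qed.

Lemma orthoC (R : realType) n (U : 'M[R]_n) : U^T *m U = 1%:M -> U *m U^T = 1%:M.
Proof. exact: mulmx1C. Qed.

Lemma char_poly_orth (R : comUnitRingType) n (V A : 'M[R]_n) :
  V^T *m V = 1%:M -> char_poly (V *m A *m V^T) = char_poly A.
Proof.
move=> VV.
have [VTu _] := mulmx1_unit VV.
have iV : invmx V^T = V.
  by rewrite -[RHS]mul1mx -(mulVmx VTu) -mulmxA VV mulmx1.
by rewrite -{1}iV char_poly_conj.
Qed.

Lemma sv_charpoly (R : realType) m n (X : 'M[R]_(m, n)) s :
  is_singular_values X s ->
  char_poly (X^T *m X) = \prod_(i < n) ('X - (s i ^+ 2)%:P).
Proof.
case => _ _ s0 [U [V [UU VV XE]]].
have -> : X^T *m X = V *m diag_mx (\row_i s i ^+ 2) *m V^T.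
  rewrite XE !trmx_mul trmxK -(rdiag_TT s0).
  rewrite !mulmxA; congr (_ *m _); rewrite -!mulmxA; congr (_ *m _).
  by rewrite [U^T *m _]mulmxA UU mul1mx.
rewrite char_poly_orth // char_poly_trig ?diag_mx_is_trig //.
by apply: eq_bigr => i _; rewrite !mxE eqxx mulr1n.
Qed.

Lemma sv_sorted (R : realType) m n (X : 'M[R]_(m, n)) s :
  is_singular_values X s ->
  sorted (fun x y : R => y <= x) [seq s i ^+ 2 | i <- iota 0 n].
Proof.
case => sd s_ge0 s0 _; apply/(sortedP 0) => i; rewrite size_map size_iota => Hi.
rewrite !(nth_map 0%N) ?size_iota ?(ltnW Hi) // !nth_iota ?(ltnW Hi) // !add0n.
have [Hm|Hm] := ltnP i.+1 (minn m n).
  by rewrite lerXn2r ?nnegrE // sd // leqnSn.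
by rewrite s0 // expr0n /= sqr_ge0.
Qed.

Lemma sv_unique (R : realType) m n (X : 'M[R]_(m, n)) s1 s2 :
  is_singular_values X s1 -> is_singular_values X s2 -> forall i, s1 i = s2 i.
Proof.
move=> H1 H2 i.
have E := sv_charpoly H1; rewrite (sv_charpoly H2) in E.
have conv : forall f : nat -> R, \prod_(i < n) ('X - (f i)%:P) =
    \prod_(x <- [seq f i | i <- iota 0 n]) ('X - x%:P).
  by move=> f; rewrite big_map -(big_mkord xpredT (fun i => 'X - (f i)%:P)) /index_iota subn0.
rewrite (conv (fun i => s1 i ^+ 2)) (conv (fun i => s2 i ^+ 2)) in E.
have /prod_XsubC_eq pe := E.
have tr : transitive (fun x y : R => y <= x).
  by move=> x y z /= h1 h2; exact: le_trans h2 h1.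
have an : antisymmetric (fun x y : R => y <= x).
  by move=> x y /andP [h1 h2]; apply/eqP; rewrite eq_le h1 h2.
have L := sorted_eq tr an (sv_sorted H2) (sv_sorted H1) pe.
have [Hi|Hi] := ltnP i n; last first.
  case: H1 => _ _ z1 _; case: H2 => _ _ z2 _.
  by rewrite z1 ?z2 // (leq_trans (geq_minr m n) Hi).
have := congr1 (fun l => nth 0 l i) L.
rewrite !(nth_map 0%N) ?size_iota // nth_iota // add0n => e2.
case: H1 => _ p1 _ _; case: H2 => _ p2 _ _.
by rewrite -(ger0_norm (p1 i)) -(ger0_norm (p2 i)) -!sqrtr_sqr e2.
Qed.

Lemma block_diag_mul (R : pzRingType) k1 k2 l1 l2 p1 p2 (a : 'M[R]_(k1, l1))
  (b : 'M[R]_(k2, l2)) (c : 'M[R]_(l1, p1)) (d : 'M[R]_(l2, p2)) :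
  block_mx a 0 0 b *m block_mx c 0 0 d = block_mx (a *m c) 0 0 (b *m d).
Proof. by rewrite mulmx_block !mulmx0 !mul0mx !addr0 !add0r. Qed.

Lemma block_diag_tr (R : pzRingType) k1 k2 l1 l2 (a : 'M[R]_(k1, l1))
  (b : 'M[R]_(k2, l2)) :
  (block_mx a 0 0 b)^T = block_mx a^T 0 0 b^T.
Proof. by rewrite tr_block_mx !trmx0. Qed.

Lemma block1_orth (R : pzRingType) k (a : 'M[R]_k) : a^T *m a = 1%:M ->
  (block_mx (1%:M : 'M_1) 0 0 a)^T *m block_mx (1%:M : 'M_1) 0 0 a = 1%:M.
Proof.
by move=> aa; rewrite block_diag_tr block_diag_mul aa trmx1 mulmx1 -scalar_mx_block.
Qed.

Lemma deflate (R : realType) m n (X : 'M[R]_(1 + m, 1 + n)) (P : 'M_(1 + m))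
  (Q : 'M_(1 + n)) (u : 'rV_(1 + m)) (v : 'rV_(1 + n)) (sg : R) :
  P^T *m P = 1%:M -> Q^T *m Q = 1%:M -> 'e_0 *m P = u -> 'e_0 *m Q = v ->
  u *m X = sg *: v -> v *m X^T = sg *: u ->
  P *m X *m Q^T = block_mx (sg%:M : 'M_1) 0 0 (drsubmx (P *m X *m Q^T)).
Proof.
move=> PP QQ Pe Qe uX vX.
have PPt := mulmx1C PP; have QQt := mulmx1C QQ.
set Y := P *m X *m Q^T.
have rowY : 'e_0 *m Y = sg *: ('e_0 : 'rV_(1 + n)).
  by rewrite /Y !mulmxA Pe uX -scalemxAl -Qe -mulmxA QQt mulmx1.
have colY : Y *m ('e_0)^T = sg *: ('e_0 : 'rV_(1 + m))^T.
  rewrite /Y -mulmxA -trmx_mul Qe -mulmxA.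
  have -> : X *m v^T = (v *m X^T)^T by rewrite trmx_mul trmxK.
  by rewrite vX linearZ /= -Pe trmx_mul -scalemxAr mulmxA PPt mul1mx.
have Yrow j : Y (0 : 'I_(1 + m)) j = sg * ((0 : 'I_(1 + n)) == j)%:R.
  have := congr1 (fun M : 'rV[R]_(1 + n) => M 0 j) rowY; rewrite -rowE !mxE => ->.
  by rewrite eqxx eq_sym.
have Ycol i : Y i (0 : 'I_(1 + n)) = sg * (i == (0 : 'I_(1 + m)))%:R.
  have := congr1 (fun M : 'cV[R]_(1 + m) => M i 0) colY; rewrite trmx_delta -colE !mxE => ->.
  by rewrite eqxx.
clearbody Y.
have Yr (i : 'I_(1 + m)) (j : 'I_(1 + n)) : (i : nat) = 0%N -> Y i j = sg * ((j : nat) == 0%N)%:R.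
  move=> i0; have -> : i = 0 by apply/val_inj.
  by rewrite Yrow -val_eqE /= eq_sym.
have Yc (i : 'I_(1 + m)) (j : 'I_(1 + n)) : (j : nat) = 0%N -> Y i j = sg * ((i : nat) == 0%N)%:R.
  move=> j0; have -> : j = 0 by apply/val_inj.
  by rewrite Ycol -val_eqE.
rewrite -{1}(submxK Y); congr block_mx; apply/matrixP => i j; rewrite !mxE ?ord1.
- by rewrite Yr //= mulr1 mulr1n.
- by rewrite Yr //= mulr0.
- by rewrite Yc //= mulr0.
Qed.

Lemma delta_neq0 (R : realType) n (j : 'I_n) : ('e_j : 'rV[R]_n) != 0.
Proof.
apply/negP => /eqP /(congr1 (fun M : 'rV[R]_n => M 0 j)); rewrite !mxE !eqxx /=.
by move/eqP; rewrite oner_eq0.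
Qed.

Lemma sv_eig (R : realType) m n (X : 'M[R]_(m, n)) s (j : 'I_n) :
  is_singular_values X s ->
  exists2 w : 'rV_n, w != 0 & w *m (X^T *m X) = s j ^+ 2 *: w.
Proof.
case => _ _ s0 [U [V [UU VV XE]]].
have -> : X^T *m X = V *m diag_mx (\row_i s i ^+ 2) *m V^T.
  rewrite XE !trmx_mul trmxK -(rdiag_TT s0).
  rewrite !mulmxA; congr (_ *m _); rewrite -!mulmxA; congr (_ *m _).
  by rewrite [U^T *m _]mulmxA UU mul1mx.
exists ('e_j *m V^T).
  apply/negP => /eqP H; have := congr1 (mulmx^~ V) H.
  by rewrite mul0mx -mulmxA VV mulmx1; apply/eqP; rewrite delta_neq0.
rewrite !mulmxA -[_ *m V^T *m V]mulmxA VV mulmx1 -rowE row_diag_mx mxE.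
by rewrite -scalemxAl.
Qed.

Lemma sub_eig (R : realType) m n (X : 'M[R]_(1 + m, 1 + n)) (P : 'M_(1 + m))
  (Q : 'M_(1 + n)) (sg : R) (X' : 'M_(m, n)) :
  P^T *m P = 1%:M -> Q^T *m Q = 1%:M ->
  P *m X *m Q^T = block_mx (sg%:M : 'M_1) 0 0 X' ->
  forall mu (w : 'rV_n), w != 0 -> w *m (X'^T *m X') = mu *: w ->
  exists2 z : 'rV_(1 + n), z != 0 & z *m (X^T *m X) = mu *: z.
Proof.
move=> PP QQ YE mu w wn0 wE.
have PPt := mulmx1C PP; have QQt := mulmx1C QQ.
have XE : X = P^T *m block_mx (sg%:M : 'M_1) 0 0 X' *m Q.
  by rewrite -YE !mulmxA PP mul1mx -mulmxA QQ mulmx1.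
have XX : X^T *m X = Q^T *m block_mx (sg%:M *m sg%:M : 'M_1) 0 0 (X'^T *m X') *m Q.
  rewrite XE !trmx_mul trmxK block_diag_tr tr_scalar_mx.
  rewrite !mulmxA -[_ *m P *m P^T]mulmxA PPt mulmx1 -[_ *m block_mx _ _ _ _ *m block_mx _ _ _ _]mulmxA.
  by rewrite block_diag_mul.
exists (row_mx 0 w *m Q).
  apply/negP => /eqP H; have := congr1 (mulmx^~ Q^T) H.
  rewrite mul0mx -mulmxA QQt mulmx1 => /eqP; rewrite row_mx_eq0 eqxx /=.
  by apply/negP.
rewrite XX !mulmxA -[_ *m Q *m Q^T]mulmxA QQt mulmx1 mul_row_block.
rewrite !mulmx0 !mul0mx !addr0 add0r wE scalemxAl.
by rewrite scale_row_mx scaler0.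
Qed.

Lemma svd_step (R : realType) m n (X : 'M[R]_(1 + m, 1 + n)) :
  (forall X' : 'M[R]_(m, n), exists s, is_singular_values X' s) ->
  X != 0 -> exists s, is_singular_values X s.
Proof.
move=> IH Xn0.
set B := X^T *m X.
have BT : B^T = B by rewrite /B trmx_mul trmxK.
have trB : 0 < \tr B.
  have trE : \tr B = \sum_i ((row i X) *m (row i X)^T) 0 0.
    rewrite /B mxtrace_mulC /mxtrace; apply: eq_bigr => i _; rewrite !mxE.
    by apply: eq_bigr => k _; rewrite !mxE.
  have [i0 Hi0] : exists i, row i X != 0.
    apply/existsP; apply: contraR Xn0 => /existsPn H.
    by apply/eqP/row_matrixP => i; rewrite row0; apply/eqP; move: (H i); rewrite negbK.
  rewrite trE (bigD1 i0) //= ltr_wpDr ?sumr_ge0 //.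
    by move=> i _; apply: dot_self_ge0.
  by rewrite lt_def dot_self_eq0 Hi0 dot_self_ge0.
have [l [v [lpos vv vB vmax]]] := @top_eig R n B BT trB.
set sg := Num.sqrt l.
have sgpos : 0 < sg by rewrite sqrtr_gt0.
have sg2 : sg * sg = l by rewrite -expr2 sqr_sqrtr // ltW.
have sgn0 : sg != 0 by rewrite gt_eqF.
set u := sg^-1 *: (v *m X^T).
have vX : v *m X^T = sg *: u by rewrite /u scalerA mulfV // scale1r.
have uX : u *m X = sg *: v.
  rewrite /u -scalemxAl -mulmxA -/B vB scalerA -sg2; congr (_ *: _).
  by rewrite mulrA mulVf // mul1r.
have uu : u *m u^T = 1%:M.
  rewrite /u linearZ /= -scalemxAl -scalemxAr scalerA trmx_mul trmxK mulmxA.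
  rewrite -[v *m X^T *m X]mulmxA -/B vB -scalemxAl vv scalerA scale_scalar_mx.
  by congr (_%:M); rewrite -sg2; field.
have [P [PP Pe]] : exists P : 'M_(1 + m), P^T *m P = 1%:M /\ 'e_0 *m P = u.
  exact: householder uu.
have [Q [QQ Qe]] : exists Q : 'M_(1 + n), Q^T *m Q = 1%:M /\ 'e_0 *m Q = v.
  exact: householder vv.
have PPt := mulmx1C PP.
have YE := deflate PP QQ Pe Qe uX vX.
set X' := drsubmx (P *m X *m Q^T : 'M_(1 + m, 1 + n)) in YE.
have [s' Hs'] := IH X'.
case: (Hs') => sd' sp' s0' [U' [V' [UU' VV' XE']]].
have mnE : minn (1 + m) (1 + n) = (minn m n).+1 by rewrite !add1n minnSS.
exists (fun i => if i is i'.+1 then s' i' else sg); split.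
- rewrite mnE => i j /andP [ij jmn]; case: j ij jmn => [|j] ij jmn.
    by case: i ij.
  case: i ij => [|i] ij /=; last by apply: sd'; rewrite ltnS in ij jmn; rewrite ij.
  rewrite ltnS in jmn.
  have jn : (j < n)%N by apply: leq_trans jmn (geq_minr m n).
  have [w wn0 wE] := sv_eig (Ordinal jn) Hs'.
  have [z zn0 zE] := sub_eig PP QQ YE wn0 wE.
  have := vmax _ z zn0 zE => /= H.
  have h2 : s' j ^+ 2 <= sg ^+ 2 by rewrite sqr_sqrtr // ltW.
  by move: h2; rewrite (@ler_pXn2r _ 2) ?nnegrE ?sp' ?sqrtr_ge0.
- by case => [|i] /=; [apply: ltW | apply: sp'].
- rewrite mnE; case => [|i] //= Hi; apply: s0'; by rewrite ltnS in Hi.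
exists (P^T *m block_mx (1%:M : 'M_1) 0 0 U'), (Q^T *m block_mx (1%:M : 'M_1) 0 0 V').
split.
- rewrite trmx_mul trmxK mulmxA -[_ *m P *m P^T]mulmxA PPt mulmx1.
  exact: block1_orth.
- rewrite trmx_mul trmxK mulmxA -[_ *m Q *m Q^T]mulmxA (mulmx1C QQ) mulmx1.
  exact: block1_orth.
have XE : X = P^T *m block_mx (sg%:M : 'M_1) 0 0 X' *m Q.
  by rewrite -YE !mulmxA PP mul1mx -mulmxA QQ mulmx1.
rewrite {1}XE XE' rdiag_block trmx_mul block_diag_tr trmxK trmx1 !mulmxA.
congr (_ *m Q); rewrite -!mulmxA; congr (P^T *m _).
by rewrite !block_diag_mul mul1mx mulmx1 !mulmxA.
Qed.

Lemma svd_exists (R : realType) m n (X : 'M[R]_(m, n)) :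
  exists s, is_singular_values X s.
Proof.
elim: m n X => [|m IH] n X.
  by rewrite (flatmx0 X); exists (fun _ => 0); apply: sv_zero.
case: n X => [|n] X.
  by rewrite (thinmx0 X); exists (fun _ => 0); apply: sv_zero.
have [->|Xn0] := eqVneq X 0; first by exists (fun _ => 0); apply: sv_zero.
exact: (@svd_step R m n X (IH n) Xn0).
Qed.

Lemma sigmaP (R : realType) m n (X : 'M[R]_(m, n)) :
  is_singular_values X (sigma X).
Proof.
rewrite /sigma; case: pselect => [h|h]; first by case: (cid h).
by exfalso; apply: h; apply: svd_exists.
Qed.

Lemma sigma_eq (R : realType) m n (X : 'M[R]_(m, n)) s :
  is_singular_values X s -> forall i, sigma X i = s i.
Proof. by move=> H i; apply: sv_unique (sigmaP X) H i. Qed.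

Lemma cs_sum (R : realFieldType) (I : finType) (x : I -> R) :
  (\sum_i x i) ^+ 2 <= #|I|%:R * \sum_i x i ^+ 2.
Proof.
set S := \sum_i x i; set Q := \sum_i x i ^+ 2.
have H : 0 <= \sum_i \sum_j (x i - x j) ^+ 2.
  by apply: sumr_ge0 => i _; apply: sumr_ge0 => j _; apply: sqr_ge0.
have inner i : \sum_j (x i - x j) ^+ 2 = #|I|%:R * x i ^+ 2 - (x i * S) *+ 2 + Q.
  under eq_bigr => j _ do rewrite sqrrB.
  by rewrite big_split /= sumrB sumr_const sumrMnl -mulr_sumr mulr_natl.
have HE : \sum_i \sum_j (x i - x j) ^+ 2 =
    #|I|%:R * Q - (S * S) *+ 2 + Q *+ #|I|.
  rewrite (eq_bigr _ (fun i _ => inner i)) big_split /= sumrB sumr_const sumrMnl.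
  by rewrite -mulr_suml -mulr_sumr.
rewrite HE mulr2n -[Q *+ _]mulr_natl in H.
rewrite expr2; set N := #|I|%:R in H *.
lra.
Qed.

Lemma sum_sq_le (R : realFieldType) (I : finType) (a : I -> R) :
  (forall i, 0 <= a i) -> \sum_i a i ^+ 2 <= (\sum_i a i) ^+ 2.
Proof.
move=> a0; rewrite [X in _ <= X]expr2 mulr_suml; apply: ler_sum => i _.
rewrite expr2; apply: ler_wpM2l => //.
by rewrite (bigD1 i) //= lerDl sumr_ge0.
Qed.

Lemma l1_tri (R : realType) m n (B D : 'M[R]_(m, n)) t : 0 <= t ->
  l1norm (B - t *: D) <= l1norm B + t * l1norm D.
Proof.
move=> t0; rewrite /l1norm mulr_sumr -big_split; apply: ler_sum => i _.
rewrite mulr_sumr -big_split; apply: ler_sum => j _; rewrite !mxE.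
by rewrite (le_trans (ler_normB _ _)) // normrM (ger0_norm t0).
Qed.

Lemma frob_tr (R : realType) m n (M : 'M[R]_(m, n)) :
  \sum_(i < m) \sum_(j < n) M i j ^+ 2 = \tr (M^T *m M).
Proof.
rewrite /mxtrace exchange_big; apply: eq_bigr => j _; rewrite mxE.
by apply: eq_bigr => i _; rewrite mxE expr2.
Qed.

Lemma l1_bound (R : realType) m n (M : 'M[R]_(m, n)) :
  l1norm M ^+ 2 <= (m * n)%:R * \sum_(i < m) \sum_(j < n) M i j ^+ 2.
Proof.
rewrite /l1norm !pair_big /=.
have H := cs_sum (fun p : 'I_m * 'I_n => `|M p.1 p.2|).
rewrite card_prod !card_ord in H; apply: (le_trans H); rewrite le_eqVlt; apply/orP; left.
by apply/eqP; congr (_ * _); apply: eq_bigr => p _; rewrite real_normK ?num_real.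
Qed.

Lemma l1_tri' (R : realType) m n (B D : 'M[R]_(m, n)) t : 0 <= t ->
  l1norm (B + t *: D) <= l1norm B + t * l1norm D.
Proof.
move=> t0; rewrite /l1norm mulr_sumr -big_split; apply: ler_sum => i _.
rewrite mulr_sumr -big_split; apply: ler_sum => j _; rewrite !mxE.
by rewrite (le_trans (ler_normD _ _)) // normrM (ger0_norm t0).
Qed.

Lemma perturb (R : realType) m n (U : 'M[R]_m) (V : 'M[R]_n) (s : nat -> R) K t :
  (forall i j, (i <= j < minn m n)%N -> s j <= s i) -> (forall i, 0 <= s i) ->
  (forall i, (minn m n <= i)%N -> s i = 0) ->
  U^T *m U = 1%:M -> V^T *m V = 1%:M -> 0 <= t <= 1 ->
  is_singular_values
    (U *m rdiag m n s *m V^T -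
       t *: (U *m rdiag m n (fun i => if (K <= i)%N then s i else 0) *m V^T))
    (fun i => if (K <= i)%N then (1 - t) * s i else s i).
Proof.
move=> sd sp s0 UU VV /andP [t0 t1].
have t1' : 0 <= 1 - t by rewrite subr_ge0.
split.
- move=> i j /andP [ij jp]; case: (leqP K i) => Ki; case: (leqP K j) => Kj.
  + by apply: ler_wpM2l => //; apply: sd; rewrite ij jp.
  + by have := leq_trans Ki ij; rewrite leqNgt Kj.
  + apply: le_trans _ (sd i j _); last by rewrite ij jp.
    by apply: ler_piMl => //; lra.
  + by apply: sd; rewrite ij jp.
- by move=> i; case: ifP => _; rewrite ?mulr_ge0.
- by move=> i Hi; rewrite s0 // mulr0 if_same.
exists U, V; split => //.
have -> : rdiag m n (fun i => if (K <= i)%N then (1 - t) * s i else s i) =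
   rdiag m n s - t *: rdiag m n (fun i => if (K <= i)%N then s i else 0).
  apply/matrixP => i j; rewrite !mxE.
  case: ((i : nat) =P j) => _; last by rewrite mulr0 subr0.
  by case: (K <= i)%N; rewrite ?mulr0 ?subr0 // mulrBl mul1r.
by rewrite mulmxBr mulmxBl -scalemxAr -scalemxAl.
Qed.

Unset Implicit Arguments.

Theorem mainTheorem19 (R : realType) (m n : nat) (A : 'M[R]_(m, n)) (K : nat)
  (gamma : R) (Xs : 'M[R]_(m, n)) :
  (K < minn m n)%N ->
  0 < gamma ->
  d_stationary (fun X : 'M[R]_(m, n) => l1norm (A - X) + gamma * TK K X) Xs ->
  Num.sqrt ((m * n)%:R) < gamma ->
  TK K Xs = 0 /\ (\rank Xs <= K)%N.
Proof.
move=> HK gpos Hstat Hg.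
have Hs := sigmaP Xs.
case: (Hs) => sd sp s0 [U [V [UU VV XE]]].
set s := sigma Xs in sd sp s0 XE.
have TKE : TK K Xs = \sum_(K <= i < minn m n) s i by [].
have T0 : 0 <= TK K Xs by rewrite TKE sumr_ge0 // => i _; exact: sp.
pose tl := fun i => if (K <= i)%N then s i else 0.
pose M := U *m rdiag m n tl *m V^T.
have TKt t : 0 <= t <= 1 -> TK K (Xs - t *: M) = (1 - t) * TK K Xs.
  move=> Ht; have P := perturb K sd sp s0 UU VV Ht; rewrite -XE in P.
  rewrite /TK big_nat_cond [in RHS]big_nat_cond mulr_sumr.
  apply: eq_bigr => i /andP [/andP [Ki _] _].
  by rewrite (sigma_eq P) Ki.
have tl0 i : 0 <= tl i by rewrite /tl; case: ifP.
have sumtl : \sum_(i < n) tl i = TK K Xs.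
  rewrite TKE -(big_mkord xpredT tl).
  have Kn : (K <= n)%N by apply: leq_trans (ltnW HK) (geq_minr m n).
  rewrite (big_cat_nat (leq0n K) Kn) /= big1_seq ?add0r; last first.
    by move=> i /andP [_]; rewrite mem_index_iota => /andP [_ iK]; rewrite /tl leqNgt iK.
  rewrite (big_cat_nat (ltnW HK) (geq_minr m n)) /= [X in _ + X]big1_seq ?addr0.
    by apply: eq_big_nat => i /andP [Ki _]; rewrite /tl Ki.
  by move=> i /andP [_]; rewrite mem_index_iota => /andP [Hi _]; rewrite /tl s0 ?if_same.
have frobM : \sum_i \sum_j M i j ^+ 2 <= TK K Xs ^+ 2.
  rewrite frob_tr.
  have tls0 : forall i, (minn m n <= i)%N -> tl i = 0.
    by move=> i Hi; rewrite /tl s0 ?if_same.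
  have -> : M^T *m M = V *m diag_mx (\row_i tl i ^+ 2) *m V^T.
    rewrite /M !trmx_mul trmxK -(rdiag_TT tls0).
    rewrite !mulmxA; congr (_ *m _); rewrite -!mulmxA; congr (_ *m _).
    by rewrite [U^T *m _]mulmxA UU mul1mx.
  rewrite mxtrace_mulC mulmxA VV mul1mx mxtrace_diag -sumtl.
  under eq_bigr => i _ do rewrite mxE.
  exact: sum_sq_le.
have l1M : l1norm M ^+ 2 <= (m * n)%:R * TK K Xs ^+ 2.
  by apply: le_trans (l1_bound M) _; apply: ler_wpM2l.
have TK0 : TK K Xs = 0.
  apply/eqP; rewrite eq_le T0 andbT leNgt; apply/negP => Tpos.
  have [l [dl l0]] := Hstat (- M).
  have key : l <= l1norm M - gamma * TK K Xs.
    apply: (cvgr_to_le dl); near=> t.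
    have t0 : 0 < t by near: t; exact: nbhs_right_gt.
    have t1 : t < 1 by near: t; apply: nbhs_right_lt; exact: ltr01.
    have Ht : 0 <= t <= 1 by rewrite !ltW.
    rewrite scalerN TKt // ler_pdivrMr //.
    have -> : A - (Xs - t *: M) = (A - Xs) + t *: M by rewrite opprD opprK addrA.
    have := l1_tri' (A - Xs) M (ltW t0).
    set L1 := l1norm (A - Xs + t *: M); set L0 := l1norm (A - Xs).
    set LM := l1norm M; set T := TK K Xs => H.
    have -> : L1 + gamma * ((1 - t) * T) - (L0 + gamma * T) =
        (L1 - L0) - t * (gamma * T) by ring.
    by rewrite mulrBl mulrC lerD2r lerBlDl mulrC.
  have gT : gamma * TK K Xs <= l1norm M by move: (le_trans l0 key); rewrite subr_ge0.
  have h1 : (gamma * TK K Xs) ^+ 2 <= l1norm M ^+ 2.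
    have gT0 : 0 <= gamma * TK K Xs by rewrite mulr_ge0 // ltW.
    by apply: lerXn2r; rewrite ?nnegrE //; apply: le_trans gT0 gT.
  have h3 : (m * n)%:R < gamma ^+ 2.
    have mn0 : 0 <= (m * n)%:R :> R by [].
    by rewrite -(sqr_sqrtr mn0) ltrXn2r ?nnegrE ?sqrtr_ge0 // ltW.
  have h4 := le_trans h1 l1M.
  set T := TK K Xs in Tpos h4; set g := gamma in h3 h4; set N := (m * n)%:R in h3 h4.
  have T2 : 0 < T * T by rewrite mulr_gt0.
  rewrite exprMn in h4.
  have : (g ^+ 2 - N) * (T ^+ 2) <= 0 by rewrite mulrBl subr_le0.
  move=> H; have : 0 < (g ^+ 2 - N) * T ^+ 2 by rewrite mulr_gt0 ?subr_gt0 // expr2.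
  by rewrite ltNge H.
split => //.
have sK i : (K <= i)%N -> s i = 0.
  move=> Ki; case: (ltnP i (minn m n)) => Hi; last exact: s0.
  move: TK0; rewrite TKE => /eqP; rewrite psumr_eq0 => [/allP H|j _]; last exact: sp.
  by apply/eqP; have := H i; rewrite mem_index_iota Ki Hi => /(_ isT).
rewrite XE.
have -> : rdiag m n s = rdiag m n s *m pid_mx K.
  apply/matrixP => i j; rewrite !mxE (bigD1 j) //= big1 ?addr0.
    rewrite !mxE eqxx /=; case: ltnP => jK; first by rewrite mulr1.
    by rewrite mulr0; case: eqP => // ij; rewrite ij sK.
  move=> k kj; rewrite !mxE.
  have -> : ((k : nat) == j) = false by apply: contraNF kj => /eqP e; apply/eqP/val_inj.
  by rewrite mulr0.
apply: leq_trans (mxrankM_maxl _ _) _.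
apply: leq_trans (mxrankM_maxr _ _) _.
apply: leq_trans (mxrankM_maxr _ _) _.
rewrite rank_pid_mx //; apply: leq_trans (ltnW HK) (geq_minr m n).
Unshelve. all: end_near.
Qed.
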